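(* Let $U_T^j$ be a sequence of regions of Riemannian 3-manifolds foliated by smooth IMCF $\Sigma^j_t$, $t\in[0,T]$, parametrized as $\Sigma\times[0,T]$ with $\Sigma$ identified with the unit sphere $S^2$. Assume that for all $j$ $$\frac{1}{H_j(x,t)^2}\ge\frac{r_0^2}{4}e^t-\frac1j,\qquad \mathrm{diam}(U_T,\bar g^j)\le D,\qquad \Big(1-\frac Cj\Big)r_0^2e^t\sigma\le g^j(x,t)\le Cr_0^2e^t\sigma.$$ Then for all $p,q\in\Sigma\times[0,T]$, $$\liminf_{j\to\infty}d_{\hat g^j}(p,q)\ge d_\delta(p,q).$$
   Context: A smooth IMCF is a smooth family of embeddings $F:\Sigma\times[0,T]\to M$ with mean curvature $H>0$ and $\partial_tF=\nu/H$. The flow identifies $U^j_T$ with $\Sigma\times[0,T]$; $\Sigma$ is identified with the unit sphere $S^2$ with round metric $\sigma$. $g^j(x,t)$ and $H_j(x,t)$ are the induced metric and mean curvature of $\Sigma^j_t$; $\hat g^j=\frac{1}{H_j^2}dt^2+g^j(x,t)$, $\bar g^j=\frac{r_0^2}{4}e^tdt^2+g^j(x,t)$, $\delta=\frac{r_0^2}{4}e^tdt^2+r_0^2e^t\sigma$; $d_{\hat g^j}$, $d_\delta$ are the induced length distances. Inequalities between metrics are as quadratic forms; $C,D,r_0$ are constants independent of $j$. *)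

(* Defs.v *)
From HB Require Import structures.
From mathcomp Require Import all_boot all_order all_algebra.
From mathcomp Require Import all_classical all_reals all_analysis.
Set Implicit Arguments. Unset Strict Implicit. Unset Printing Implicit Defensive.
Import Order.TTheory GRing.Theory Num.Theory.
Import numFieldNormedType.Exports.
Local Open Scope classical_set_scope.
Local Open Scope ring_scope.

Section Defs.
Variable R : realType.

Definition dot3 (u v : 'rV[R]_3) : R := (u *m v^T) 0 0.

Definition on_sphere (x : 'rV[R]_3) : Prop := dot3 x x = 1.

Definition tangent (x v : 'rV[R]_3) : Prop := dot3 x v = 0.

Definition bform (M : 'M[R]_3) (u v : 'rV[R]_3) : R := (u *m M *m v^T) 0 0.

Definition UT (T : R) : set ('rV[R]_3 * R) :=
  [set p | on_sphere p.1 /\ 0 <= p.2 <= T].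

(* Metrics on S^2 x [0,T] without cross terms:  A(x,t) dt^2 + G(x,t),
   where A(x,t) is a scalar and G(x,t) is a bilinear form on T_x S^2
   (represented by a 3x3 matrix, only its values on tangent vectors matter). *)

(* Admissible curves: C^1 curves s |-> (c s, tau s) on [0,1] lying in
   S^2 x [0,T], from p to q (defined and C^1 on all of R; every C^1 curve
   on [0,1] extends so). *)
Definition admissible (T : R) (p q : 'rV[R]_3 * R)
    (c : R -> 'rV[R]_3) (tau : R -> R) : Prop :=
  [/\ (forall s, derivable c s 1) /\ continuous (derive1 c),
      (forall s, derivable tau s 1) /\ continuous (derive1 tau),
      (forall s, 0 <= s <= 1 -> UT T (c s, tau s)),
      (c 0, tau 0) = p & (c 1, tau 1) = q].

Definition curve_length (A : 'rV[R]_3 -> R -> R) (G : 'rV[R]_3 -> R -> 'M[R]_3)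
    (c : R -> 'rV[R]_3) (tau : R -> R) : \bar R :=
  (\int[lebesgue_measure]_(s in `[0%R, 1%R])
     (Num.sqrt (A (c s) (tau s) * (derive1 tau s) ^+ 2
                + bform (G (c s) (tau s)) (derive1 c s) (derive1 c s)))%:E)%E.

Definition len_dist (T : R) (A : 'rV[R]_3 -> R -> R) (G : 'rV[R]_3 -> R -> 'M[R]_3)
    (p q : 'rV[R]_3 * R) : \bar R :=
  ereal_inf [set l | exists (c : R -> 'rV[R]_3) (tau : R -> R),
                        admissible T p q c tau /\ l = curve_length A G c tau].

Definition len_diam (T : R) (A : 'rV[R]_3 -> R -> R) (G : 'rV[R]_3 -> R -> 'M[R]_3)
    : \bar R :=
  ereal_sup [set l | exists p q, UT T p /\ UT T q /\ l = len_dist T A G p q].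

(* The round metric sigma on S^2 is the restriction of the Euclidean product:
   matrix 1%:M.  The metric delta = r0^2/4 e^t dt^2 + r0^2 e^t sigma. *)
Definition delta_A (r0 : R) : 'rV[R]_3 -> R -> R := fun _ t => r0 ^+ 2 / 4 * expR t.
Definition delta_G (r0 : R) : 'rV[R]_3 -> R -> 'M[R]_3 :=
  fun _ t => (r0 ^+ 2 * expR t) *: 1%:M.

End Defs.

(* Main.v *)
Require Import Defs.
From HB Require Import structures.
From mathcomp Require Import all_boot all_order all_algebra.
From mathcomp Require Import all_classical all_reals all_analysis.
From mathcomp Require Import ring lra.
Import Order.TTheory GRing.Theory Num.Theory.
Import numFieldNormedType.Exports.
Local Open Scope classical_set_scope.
Local Open Scope ring_scope.

Section S.
Variable R : realType.

Lemma dot3E (u v : 'rV[R]_3) : dot3 u v = u 0 0 * v 0 0 + u 0 1 * v 0 1 + u 0 2 * v 0 2.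
Proof.
rewrite /dot3 mxE !big_ord_recr big_ord0 /= !mxE add0r.
by congr (_ + _ + _); congr (_ * _); congr (_ _ _); apply/val_inj.
Qed.

Lemma dot3_ge0 (u : 'rV[R]_3) : 0 <= dot3 u u.
Proof. by rewrite dot3E -!expr2 !addr_ge0 ?sqr_ge0. Qed.

Lemma bform_scal (a : R) (u : 'rV[R]_3) : bform (a *: 1%:M) u u = a * dot3 u u.
Proof. by rewrite /bform /dot3 -scalemxAr mulmx1 -scalemxAl mxE. Qed.

Lemma tangent_int (c : R -> 'rV[R]_3) s : (forall t, derivable c t 1) ->
  (\forall t \near s, on_sphere (c t)) -> dot3 (c s) (derive1 c s) = 0.
Proof.
move=> dc sph.
pose ci (i : 'I_3) t := c t 0 i.
have dci i t : derivable (ci i) t 1 := ((derivable_mxP c t 1).1 (dc t) 0 i).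
have Dc i : derive1 c s 0 i = 'D_1 (ci i) s.
  by rewrite derive1E derive_mx // mxE.
pose p i := ci i * ci i.
pose f := p 0 + p 1 + p 2.
have dp i : derivable (p i) s 1 by exact: derivableM.
have fE : \forall t \near s, f t = cst 1 t.
  near=> t; transitivity (dot3 (c t) (c t)); first by rewrite dot3E.
  near: t; exact: sph.
have := @near_eq_derive _ _ _ _ _ _ (1:R) fE; rewrite derive_cst /f.
have hM i : 'D_1 (p i) s = ci i s *: 'D_1 (ci i) s + ci i s *: 'D_1 (ci i) s.
  exact: deriveM.
have dq : derivable (p 0 + p 1) s 1 by exact: derivableD.
rewrite !deriveD // => H.
have H2 : (ci 0 s *: 'D_1 (ci 0) s + ci 0 s *: 'D_1 (ci 0) s) +
  (ci 1 s *: 'D_1 (ci 1) s + ci 1 s *: 'D_1 (ci 1) s) +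
  (ci 2 s *: 'D_1 (ci 2) s + ci 2 s *: 'D_1 (ci 2) s) = 0.
  by rewrite -H; congr (_ + _ + _); apply/esym/hM.
rewrite -!Dc /ci in H2.
rewrite dot3E.
have : 2 * (c s 0 0 * derive1 c s 0 0 + c s 0 1 * derive1 c s 0 1 + c s 0 2 * derive1 c s 0 2) = 0.
  by rewrite -H2; rewrite /GRing.scale /=; ring.
by move/eqP; rewrite mulf_eq0 pnatr_eq0 /= => /eqP.

Unshelve. all: by end_near. Qed.


Lemma cont_at_right0 (phi : R -> R) (a : R) : {for a, continuous phi} ->
  (\forall t \near a^'+, phi t = 0) -> phi a = 0.
Proof.
move=> cphi near0.
have h1 : phi t @[t --> a^'+] --> phi a := cvg_at_right_filter cphi.
have h2 : phi t @[t --> a^'+] --> 0.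
  have e : {near a^'+, (fun=> 0) =1 phi}.
    by move: near0; apply: filterS => t /esym.
  exact: (cvg_trans (near_eq_cvg e) (cvg_cst (0:R))).
exact: (cvg_unique _ h1 h2).
Unshelve. all: by end_near. Qed.

Lemma cont_at_left0 (phi : R -> R) (a : R) : {for a, continuous phi} ->
  (\forall t \near a^'-, phi t = 0) -> phi a = 0.
Proof.
move=> cphi near0.
have h1 : phi t @[t --> a^'-] --> phi a := cvg_at_left_filter cphi.
have h2 : phi t @[t --> a^'-] --> 0.
  have e : {near a^'-, (fun=> 0) =1 phi}.
    by move: near0; apply: filterS => t /esym.
  exact: (cvg_trans (near_eq_cvg e) (cvg_cst (0:R))).
exact: (cvg_unique _ h1 h2).
Unshelve. all: by end_near. Qed.

Lemma tangent_adm (T : R) (p q : 'rV[R]_3 * R) (c : R -> 'rV[R]_3) (tau : R -> R) (s : R) : admissible T p q c tau -> 0 <= s <= 1 ->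
  tangent (c s) (derive1 c s).
Proof.
case=> -[dc cc'] _ hU _ _ hs.
have inner t : 0 < t < 1 -> dot3 (c t) (derive1 c t) = 0.
  move=> ht; apply: tangent_int => //.
  near=> u.
  have : u \in `]0, 1[ by near: u; apply: near_in_itvoo; rewrite in_itv.
  rewrite in_itv /= => /andP[u0 u1].
  by have := hU u; rewrite (ltW u0) (ltW u1) => /(_ isT) [].
have cc i : continuous (fun t => c t 0 i).
  move=> t; apply: (@continuous_comp _ _ _ c (fun M : 'rV[R]_3 => M 0 i) t).
    exact/differentiable_continuous/derivable1_diffP.
  exact: coord_continuous.
have cc'i i : continuous (fun t => derive1 c t 0 i).
  move=> t; apply: (@continuous_comp _ _ _ (derive1 c) (fun M : 'rV[R]_3 => M 0 i) t).
    exact: cc'.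
  exact: coord_continuous.
have cphi t : {for t, continuous (fun t => dot3 (c t) (derive1 c t))}.
  have -> : (fun t => dot3 (c t) (derive1 c t)) = (fun t => c t 0 0 * derive1 c t 0 0
     + c t 0 1 * derive1 c t 0 1 + c t 0 2 * derive1 c t 0 2).
    by apply/funext => u; rewrite dot3E.
  apply: continuousD; [apply: continuousD|]; apply: continuousM;
    by [apply: cc | apply: cc'i].
rewrite /tangent.
case/andP: hs; rewrite le0r => /orP[/eqP->|s0]; rewrite le_eqVlt => /orP[/eqP s1|s1].
- by move: s1 => /esym/eqP; rewrite oner_eq0.
- apply: (@cont_at_right0 (fun t => dot3 (c t) (derive1 c t))) => //; near=> t; apply: inner; apply/andP; split.
    by near: t; exact: nbhs_right_gt.
  by near: t; exact: nbhs_right_lt.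
- rewrite s1; apply: (@cont_at_left0 (fun t => dot3 (c t) (derive1 c t))) => //; near=> t; apply: inner; apply/andP; split.
    by near: t; exact: nbhs_left_gt.
  by near: t; exact: nbhs_left_lt.
- by apply: inner; rewrite s0 s1.
Unshelve. all: by end_near. Qed.

Import HBNNSimple.

Lemma int_scale_le (D : set R) (f g : R -> \bar R) (a : R) : 0 < a ->
  (forall x, D x -> (0 <= f x)%E) -> (forall x, D x -> (a%:E * f x <= g x)%E) ->
  (a%:E * \int[lebesgue_measure]_(x in D) f x <= \int[lebesgue_measure]_(x in D) g x)%E.
Proof.
move=> a0 f0 fg.
have g0 x : D x -> (0 <= g x)%E.
  move=> Dx; apply: le_trans (fg x Dx).
  by apply: mule_ge0; [rewrite lee_fin ltW | exact: f0].
rewrite (ge0_integralE lebesgue_measure f0) (ge0_integralE lebesgue_measure g0).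
rewrite -lee_pdivlMl //.
apply: ge_ereal_sup => _ [h hf <-].
rewrite lee_pdivlMl // -sintegralrM.
apply: ereal_sup_ubound; exists (scale_nnsfun h (ltW a0)) => //=.
move=> x /=; rewrite /patch; case: ifPn => Dx.
  rewrite EFinM; apply: le_trans (fg x (set_mem Dx)).
  apply: lee_wpmul2l; first by rewrite lee_fin ltW.
  by have := hf x; rewrite /patch Dx.
have := hf x; rewrite /patch (negbTE Dx) => hx.
have p0 : (point : \bar R) = 0%E by [].
rewrite p0 in hx *; rewrite EFinM.
have -> : h x = 0 by apply/le_anti; rewrite -lee_fin hx /= fun_ge0.
by rewrite mule0.
Qed.

Lemma key_ineq (k A Aj B Bj tt : R) : 0 <= k -> 0 <= tt -> k * A <= Aj ->
  k * B <= Bj -> 0 <= A * tt + B ->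
  Num.sqrt k * Num.sqrt (A * tt + B) <= Num.sqrt (Aj * tt + Bj).
Proof.
move=> k0 tt0 hA hB h0; rewrite -sqrtrM //; apply: ler_wsqrtr.
have : 0 <= (Aj - k * A) * tt by apply: mulr_ge0; lra.
nra.
Qed.

Lemma sqrt_ge_id (x : R) : 0 <= x <= 1 -> x <= Num.sqrt x.
Proof.
case/andP=> x0 x1.
have s1 : Num.sqrt x <= 1 by rewrite -sqrtr1 ler_wsqrtr.
have s0 := sqrtr_ge0 x.
have : x = Num.sqrt x * Num.sqrt x by rewrite -sqrtrM // sqrtr_sqr ger0_norm.
nra.
Qed.

End S.

Theorem corollary4p2 (R : realType) (T r0 C D : R)
  (g : nat -> 'rV[R]_3 -> R -> 'M[R]_3) (H : nat -> 'rV[R]_3 -> R -> R) :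
  0 < T -> 0 < r0 -> 0 < C ->
  (* regularity of the induced metrics and mean curvatures *)
  (forall j, continuous (fun xt : 'rV[R]_3 * R => g j xt.1 xt.2)) ->
  (forall j, continuous (fun xt : 'rV[R]_3 * R => H j xt.1 xt.2)) ->
  (forall j x t, (g j x t)^T = g j x t) ->
  (forall j x t v, (0 < j)%N -> UT T (x, t) -> tangent x v -> v != 0 ->
     0 < bform (g j x t) v v) ->
  (* H > 0 along the flow *)
  (forall j x t, (0 < j)%N -> UT T (x, t) -> 0 < H j x t) ->
  (* 1/H_j^2 >= r0^2/4 e^t - 1/j *)
  (forall j x t, (0 < j)%N -> UT T (x, t) ->
     r0 ^+ 2 / 4 * expR t - j%:R^-1 <= (H j x t ^+ 2)^-1) ->
  (* diam(U_T, gbar^j) <= D *)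
  (forall j, (0 < j)%N ->
     (len_diam T (delta_A r0) (g j) <= D%:E)%E) ->
  (* (1 - C/j) r0^2 e^t sigma <= g^j(x,t) <= C r0^2 e^t sigma *)
  (forall j x t v, (0 < j)%N -> UT T (x, t) -> tangent x v ->
     (1 - C / j%:R) * r0 ^+ 2 * expR t * dot3 v v <= bform (g j x t) v v /\
     bform (g j x t) v v <= C * r0 ^+ 2 * expR t * dot3 v v) ->
  forall p q, UT T p -> UT T q ->
    (len_dist T (delta_A r0) (delta_G r0) p q <=
     limn_einf (fun j => len_dist T (fun x t => (H j x t ^+ 2)^-1)%R (g j) p q))%E.
Proof.
move=> hT hr0 hC gc Hc gsym gpos Hpos hH hdiam hg p q hp hq.
set dd := len_dist T (delta_A r0) (delta_G r0) p q.
set u := fun j => len_dist T (fun x t => (H j x t ^+ 2)^-1) (g j) p q.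
set m := r0 ^+ 2 / 4.
have m0 : 0 < m by rewrite /m divr_gt0 // exprn_gt0.
set K := C + m^-1.
have K0 : 0 < K by rewrite /K addr_gt0 // invr_gt0.
have bound j : (0 < j)%N -> K < j%:R ->
    ((Num.sqrt (1 - K / j%:R))%:E * dd <= u j)%E.
  move=> j0 Kj.
  have jpos : 0 < j%:R :> R by rewrite ltr0n.
  set k := 1 - K / j%:R.
  have k0 : 0 < k by rewrite /k subr_gt0 ltr_pdivrMr // mul1r.
  apply: le_ereal_inf_tmp => _ [c [tau [adm ->]]].
  apply: (@le_trans _ _ ((Num.sqrt k)%:E * curve_length (delta_A r0) (delta_G r0) c tau)%E).
    apply: lee_wpmul2l; first by rewrite lee_fin sqrtr_ge0.
    by apply: ereal_inf_lbound; exists c, tau.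
  apply: int_scale_le; first by rewrite sqrtr_gt0.
    by move=> x _; rewrite lee_fin sqrtr_ge0.
  move=> s Ds.
  have hs : 0 <= s <= 1 by move: Ds; rewrite /= in_itv.
  have [[dc cc'] [dtau ctau'] hU _ _] := adm.
  have Us := hU s hs.
  have tan := @tangent_adm R T p q c tau s adm hs.
  have t0 : 0 <= tau s by case: Us => _ /andP[].
  have e1 : 1 <= expR (tau s) by apply: le_trans (expR_ge1Dx _); rewrite lerDl.
  have Ut : UT T (c s, tau s) := Us.
  have [hg1 _] := hg j (c s) (tau s) (derive1 c s) j0 Ut tan.
  have hH1 := hH j (c s) (tau s) j0 Ut.
  rewrite -EFinM lee_fin /delta_G bform_scal.
  have d0 := @dot3_ge0 R (derive1 c s).
  have ee0 : 0 <= r0 ^+ 2 * expR (tau s) by rewrite mulr_ge0 ?expR_ge0 ?sqr_ge0.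
  apply: key_ineq; first exact: ltW.
  - exact: sqr_ge0.
  - rewrite /delta_A; apply: le_trans hH1.
    have Am : m <= r0 ^+ 2 / 4 * expR (tau s).
      by rewrite -{1}(mulr1 m) ler_wpM2l // ltW.
    have KA : 1 <= K * (r0 ^+ 2 / 4 * expR (tau s)).
      apply: (@le_trans _ _ (m^-1 * m)); first by rewrite mulVf // gt_eqF.
      apply: ler_pM.
      + by rewrite invr_ge0 ltW.
      + exact: ltW m0.
      + by rewrite /K lerDr ltW.
      + exact: Am.
    rewrite /k mulrBl mul1r lerD2l lerN2 mulrAC ler_pdivlMr // mulrC.
    by rewrite mulfV ?gt_eqF.
  - apply: le_trans hg1.
    set P := r0 ^+ 2 * expR (tau s) * _.
    have P0 : 0 <= P by rewrite mulr_ge0.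
    have -> : (1 - C / j%:R) * r0 ^+ 2 * expR (tau s) * dot3 (derive1 c s) (derive1 c s) = (1 - C / j%:R) * P by rewrite /P !mulrA.
    apply: ler_wpM2r => //.
    rewrite /k lerD2l lerN2 ler_wpM2r // ?invr_ge0 ?ltW //.
    by rewrite /K ltrDl invr_gt0.
  - rewrite /delta_A; apply: addr_ge0; last by rewrite mulr_ge0.
    by rewrite mulr_ge0 ?sqr_ge0 // mulr_ge0 ?expR_ge0 // ltW.

have dd0 : (0 <= dd)%E.
  apply: le_ereal_inf_tmp => _ [c [tau [_ ->]]].
  by apply: integral_ge0 => x _; rewrite lee_fin sqrtr_ge0.
apply/lee_mul01Pr => // r /andP[rp r1].
have r1' : 0 < 1 - r by rewrite subr_gt0.
set N := (Num.truncn (K / (1 - r))).+1.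
have hN n : (N <= n)%N -> (r%:E * dd <= u n)%E.
  move=> Nn.
  have KN : K / (1 - r) < n%:R.
    by apply: (lt_le_trans (truncnS_gt _)); rewrite ler_nat.
  have npos : 0 < n%:R :> R.
    by apply: le_lt_trans KN; rewrite divr_ge0 // ltW.
  have Kn : K < n%:R.
    apply: le_lt_trans KN; rewrite ler_pdivlMr // ler_piMr ?ltW //.
    by rewrite ltrBlDr ltrDl.
  have n0 : (0 < n)%N by rewrite -(ltr0n R).
  have bn := bound n n0 Kn; refine (le_trans _ bn).
  apply: lee_wpmul2r => //; rewrite lee_fin.
  have kr : r <= 1 - K / n%:R.
    rewrite lerBrDr -lerBrDl ler_pdivrMr // mulrC -ler_pdivrMr //.
    exact: ltW.
  apply: (le_trans kr); apply: sqrt_ge_id; apply/andP; split.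
    by apply: le_trans kr; apply: ltW.
  by rewrite lerBlDr lerDl divr_ge0 // ltW.
rewrite limn_einf_lim; apply: lime_ge; first exact: is_cvg_einfs.
near=> n; apply: le_ereal_inf_tmp => _ [k /= nk <-]; apply: hN.
apply: leq_trans nk; near: n; by exists N.
Unshelve. all: by end_near.
Qed.
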